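(* Let $A$ be a densely defined closed operator in a complex Hilbert space $\mathcal{H}$ such that $\operatorname{Num}(A)$ has an interior point, $\operatorname{Num}(A)\neq\mathbb{C}$, $\operatorname{D}(A)\subset\operatorname{D}(A^* )$ and $\sigma(A)\subset\overline{\operatorname{Num}}(A)$. If $\lambda\in\partial\operatorname{Num}(A)$ is a point of unilateral infinite curvature of $\partial\overline{\operatorname{Num}}(A)$, then $\lambda\in\sigma_{ap}(A)$.
   Context: $\operatorname{Num}(A)=\{\langle Af,f\rangle: f\in\operatorname{D}(A),\|f\|=1\}$, $\overline{\operatorname{Num}}(A)$ its closure. Approximate point spectrum: $\sigma_{ap}(A)=\{\lambda\in\mathbb{C}:\exists (u_n)\subset\operatorname{D}(A),\ \|u_n\|=1,\ (A-\lambda)u_n\to0\}$. Curvature conventions. Let $\Omega\subset\mathbb{C}$ be a closed convex set with nonempty interior and $\lambda\in\partial\Omega$. There is at least one supporting line of $\Omega$ through $\lambda$; $\lambda$ is called a corner point if there is more than one. If $\lambda$ is a corner point, $\Omega$ lies in a closed sector with vertex $\lambda$ and semivertical angle $<\pi/2$; take the smallest such sector and let $l_\lambda$ be the supporting line through $\lambda$ orthogonal to the axis of this sector; otherwise $l_\lambda$ is the unique supporting line. Use rectangular coordinates $(\xi,\eta)$ with origin at $\lambda$, $\xi$-axis equal to $l_\lambda$, oriented so that $\Omega\subset\{\eta\ge 0\}$. Let $D'_\varepsilon=\{(\xi,\eta):\xi^2+\eta^2\le\varepsilon^2,\ \xi\neq 0\}$. Define $\gamma_u^+(\lambda)=\lim_{\varepsilon\downarrow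 0}\sup\{\eta/\xi^2:(\xi,\eta)\in\partial\Omega\cap D'_\varepsilon,\ \xi>0\}$ and $\gamma_l^+(\lambda)$ the same with $\inf$ in place of $\sup$; $\gamma_u^-(\lambda),\gamma_l^-(\lambda)$ are defined analogously with $\xi<0$. Set $\gamma_u(\lambda)=\max(\gamma_u^+(\lambda),\gamma_u^-(\lambda))$, $\gamma_l(\lambda)=\min(\gamma_l^+(\lambda),\gamma_l^-(\lambda))$. The point $\lambda$ is of infinite upper curvature if $\gamma_u(\lambda)=\infty$, and of unilateral infinite curvature if $\gamma_l^+(\lambda)=\infty$ or $\gamma_l^-(\lambda)=\infty$. For an operator $A$, these notions at $\lambda\in\partial\operatorname{Num}(A)$ refer to $\Omega=\overline{\operatorname{Num}}(A)$. *)

(* Defs.v *)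
From Stdlib Require Import Reals.
Open Scope R_scope.

Record cplx := mkC { Cre : R; Cim : R }.
Definition C0 : cplx := mkC 0 0.
Definition C1 : cplx := mkC 1 0.
Definition Ci : cplx := mkC 0 1.
Definition Cadd (z w : cplx) : cplx := mkC (Cre z + Cre w) (Cim z + Cim w).
Definition Copp (z : cplx) : cplx := mkC (- Cre z) (- Cim z).
Definition Csub (z w : cplx) : cplx := Cadd z (Copp w).
Definition Cmul (z w : cplx) : cplx :=
  mkC (Cre z * Cre w - Cim z * Cim w) (Cre z * Cim w + Cim z * Cre w).
Definition Cconj (z : cplx) : cplx := mkC (Cre z) (- Cim z).
Definition Cmod (z : cplx) : R := sqrt (Cre z ^ 2 + Cim z ^ 2).

(* inner product: linear in the first argument, conjugate-linear in the second *)
Record HilbertSpace := {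
  hcarrier :> Type;
  hadd : hcarrier -> hcarrier -> hcarrier;
  hzero : hcarrier;
  hopp : hcarrier -> hcarrier;
  hscal : cplx -> hcarrier -> hcarrier;
  inner : hcarrier -> hcarrier -> cplx;
  hadd_assoc : forall x y z, hadd x (hadd y z) = hadd (hadd x y) z;
  hadd_comm : forall x y, hadd x y = hadd y x;
  hadd_zero : forall x, hadd x hzero = x;
  hadd_opp : forall x, hadd x (hopp x) = hzero;
  hscal_one : forall x, hscal C1 x = x;
  hscal_assoc : forall a b x, hscal a (hscal b x) = hscal (Cmul a b) x;
  hscal_addv : forall a x y, hscal a (hadd x y) = hadd (hscal a x) (hscal a y);
  hscal_adds : forall a b x, hscal (Cadd a b) x = hadd (hscal a x) (hscal b x);
  inner_add_l : forall x y z, inner (hadd x y) z = Cadd (inner x z) (inner y z);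
  inner_scal_l : forall a x y, inner (hscal a x) y = Cmul a (inner x y);
  inner_conj_sym : forall x y, inner y x = Cconj (inner x y);
  inner_pos : forall x, 0 <= Cre (inner x x);
  inner_def : forall x, inner x x = C0 -> x = hzero;
  hcomplete : forall u : nat -> hcarrier,
    (forall eps, 0 < eps -> exists N, forall n m, (N <= n)%nat -> (N <= m)%nat ->
        sqrt (Cre (inner (hadd (u n) (hopp (u m))) (hadd (u n) (hopp (u m))))) < eps) ->
    exists l, forall eps, 0 < eps -> exists N, forall n, (N <= n)%nat ->
        sqrt (Cre (inner (hadd (u n) (hopp l)) (hadd (u n) (hopp l)))) < eps
}.

Arguments hadd {h}. Arguments hzero {h}. Arguments hopp {h}.
Arguments hscal {h}. Arguments inner {h}.

Definition hsub {Hs : HilbertSpace} (x y : Hs) : Hs := hadd x (hopp y).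
Definition hnorm {Hs : HilbertSpace} (x : Hs) : R := sqrt (Cre (inner x x)).
Definition hconv {Hs : HilbertSpace} (u : nat -> Hs) (l : Hs) : Prop :=
  forall eps, 0 < eps -> exists N, forall n, (N <= n)%nat -> hnorm (hsub (u n) l) < eps.

(* An operator is a pair (D, A): D : H -> Prop is the domain, A : H -> H,
   whose values outside D are irrelevant. *)
Definition is_lin_op {Hs : HilbertSpace} (D : Hs -> Prop) (A : Hs -> Hs) : Prop :=
  D hzero /\
  (forall x y, D x -> D y -> D (hadd x y)) /\
  (forall a x, D x -> D (hscal a x)) /\
  (forall x y, D x -> D y -> A (hadd x y) = hadd (A x) (A y)) /\
  (forall a x, D x -> A (hscal a x) = hscal a (A x)).

Definition densely_defined {Hs : HilbertSpace} (D : Hs -> Prop) : Prop :=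
  forall x eps, 0 < eps -> exists y, D y /\ hnorm (hsub x y) < eps.

Definition closed_op {Hs : HilbertSpace} (D : Hs -> Prop) (A : Hs -> Hs) : Prop :=
  forall (u : nat -> Hs) x y, (forall n, D (u n)) -> hconv u x ->
    hconv (fun n => A (u n)) y -> D x /\ A x = y.

Definition adj_dom {Hs : HilbertSpace} (D : Hs -> Prop) (A : Hs -> Hs) (y : Hs) : Prop :=
  exists z, forall x, D x -> inner (A x) y = inner x z.

Definition NumRange {Hs : HilbertSpace} (D : Hs -> Prop) (A : Hs -> Hs) (w : cplx) : Prop :=
  exists f, D f /\ hnorm f = 1 /\ w = inner (A f) f.

Definition resolvent {Hs : HilbertSpace} (D : Hs -> Prop) (A : Hs -> Hs) (lam : cplx) : Prop :=
  (forall y, exists x, D x /\ hsub (A x) (hscal lam x) = y) /\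
  (exists M, forall x, D x -> hnorm x <= M * hnorm (hsub (A x) (hscal lam x))).
Definition spectrum {Hs : HilbertSpace} (D : Hs -> Prop) (A : Hs -> Hs) (lam : cplx) : Prop :=
  ~ resolvent D A lam.

Definition approx_point_spectrum {Hs : HilbertSpace} (D : Hs -> Prop) (A : Hs -> Hs)
  (lam : cplx) : Prop :=
  exists u : nat -> Hs, (forall n, D (u n)) /\ (forall n, hnorm (u n) = 1) /\
    hconv (fun n => hsub (A (u n)) (hscal lam (u n))) hzero.

Definition ccl (S : cplx -> Prop) (w : cplx) : Prop :=
  forall eps, 0 < eps -> exists z, S z /\ Cmod (Csub w z) < eps.
Definition cinterior (S : cplx -> Prop) (w : cplx) : Prop :=
  exists eps, 0 < eps /\ forall z, Cmod (Csub z w) < eps -> S z.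
Definition cbdry (S : cplx -> Prop) (w : cplx) : Prop := ccl S w /\ ~ cinterior S w.

(* A supporting line of Om through lam is encoded by its unit normal n pointing
   towards Om:  Om is contained in { w : Re((w - lam) * conj n) >= 0 }. *)
Definition supporting_normal (Om : cplx -> Prop) (lam n : cplx) : Prop :=
  Cmod n = 1 /\ forall w, Om w -> 0 <= Cre (Cmul (Csub w lam) (Cconj n)).

(* more than one supporting line through lam (n and -n give the same line) *)
Definition corner_point (Om : cplx -> Prop) (lam : cplx) : Prop :=
  exists n1 n2, supporting_normal Om lam n1 /\ supporting_normal Om lam n2 /\
    n1 <> n2 /\ n1 <> Copp n2.

(* closed sector with vertex lam, unit axis direction d, semivertical angle al *)
Definition in_sector (lam d : cplx) (al : R) (w : cplx) : Prop :=
  Cmod (Csub w lam) * cos al <= Cre (Cmul (Csub w lam) (Cconj d)).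
Definition sector_contains (Om : cplx -> Prop) (lam d : cplx) (al : R) : Prop :=
  Cmod d = 1 /\ 0 <= al < PI / 2 /\ forall w, Om w -> in_sector lam d al w.
Definition smallest_sector (Om : cplx -> Prop) (lam d : cplx) (al : R) : Prop :=
  sector_contains Om lam d al /\
  forall d' al', sector_contains Om lam d' al' ->
    forall w, in_sector lam d al w -> in_sector lam d' al' w.

(* n is the inward unit normal of the distinguished supporting line l_lam *)
Definition l_normal (Om : cplx -> Prop) (lam n : cplx) : Prop :=
  (corner_point Om lam -> exists al, smallest_sector Om lam n al) /\
  (~ corner_point Om lam -> supporting_normal Om lam n).

(* coordinates (xi, eta) with origin lam, eta-axis along n, xi-axis along -i n *)
Definition xi_coord (lam n w : cplx) : R :=
  Cre (Cmul (Csub w lam) (Cconj (Cmul (Copp Ci) n))).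
Definition eta_coord (lam n w : cplx) : R :=
  Cre (Cmul (Csub w lam) (Cconj n)).

(* gamma_l^+(lam) = lim_{eps->0} inf { eta/xi^2 : (xi,eta) in bd Om /\ D'_eps, xi > 0 } = +infinity *)
Definition gamma_l_plus_infinite (Om : cplx -> Prop) (lam n : cplx) : Prop :=
  forall M, exists delta, 0 < delta /\ forall eps, 0 < eps < delta ->
    forall w, cbdry Om w ->
      xi_coord lam n w ^ 2 + eta_coord lam n w ^ 2 <= eps ^ 2 ->
      xi_coord lam n w <> 0 -> 0 < xi_coord lam n w ->
      M <= eta_coord lam n w / xi_coord lam n w ^ 2.
Definition gamma_l_minus_infinite (Om : cplx -> Prop) (lam n : cplx) : Prop :=
  forall M, exists delta, 0 < delta /\ forall eps, 0 < eps < delta ->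
    forall w, cbdry Om w ->
      xi_coord lam n w ^ 2 + eta_coord lam n w ^ 2 <= eps ^ 2 ->
      xi_coord lam n w <> 0 -> xi_coord lam n w < 0 ->
      M <= eta_coord lam n w / xi_coord lam n w ^ 2.

Definition unilateral_infinite_curvature (Om : cplx -> Prop) (lam : cplx) : Prop :=
  exists n, l_normal Om lam n /\
    (gamma_l_plus_infinite Om lam n \/ gamma_l_minus_infinite Om lam n).

(* Main.v *)
Require Import Defs.
From Stdlib Require Import Reals.
From Stdlib Require Import Lra Lia Psatz Classical ClassicalEpsilon.
Open Scope R_scope.

Lemma cext (z w : cplx) : Cre z = Cre w -> Cim z = Cim w -> z = w.
Proof. destruct z, w; simpl; intros; subst; reflexivity. Qed.

Ltac csolve := apply cext; simpl; ring.

Lemma Cmod_sq z : Cmod z ^ 2 = Cre z ^ 2 + Cim z ^ 2.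
Proof. unfold Cmod. rewrite pow2_sqrt; [reflexivity| nra]. Qed.
Lemma Cmod_ge0 z : 0 <= Cmod z.
Proof. unfold Cmod; apply sqrt_pos. Qed.
Lemma Cre_le z : Rabs (Cre z) <= Cmod z.
Proof. pose proof (Cmod_sq z); pose proof (Cmod_ge0 z).
  apply Rsqr_le_abs_0 in H0 || idtac.
  apply Rabs_le; split; nra. Qed.
Lemma Cim_le z : Rabs (Cim z) <= Cmod z.
Proof. pose proof (Cmod_sq z); pose proof (Cmod_ge0 z). apply Rabs_le; split; nra. Qed.
Lemma Cmod_le_of_sq z r : 0 <= r -> Cre z ^ 2 + Cim z ^ 2 <= r ^ 2 -> Cmod z <= r.
Proof. intros. pose proof (Cmod_sq z); pose proof (Cmod_ge0 z). nra. Qed.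
Lemma Cmod_lt_sq z r : Cmod z < r -> Cre z ^ 2 + Cim z ^ 2 < r ^ 2.
Proof. intros. pose proof (Cmod_sq z); pose proof (Cmod_ge0 z). nra. Qed.
Lemma Cmod_mul z w : Cmod (Cmul z w) = Cmod z * Cmod w.
Proof. unfold Cmod. rewrite <- sqrt_mult by nra. f_equal. destruct z, w; simpl; ring. Qed.
Lemma Cmod_add z w : Cmod (Cadd z w) <= Cmod z + Cmod w.
Proof. pose proof (Cmod_sq (Cadd z w)); pose proof (Cmod_sq z); pose proof (Cmod_sq w).
  pose proof (Cmod_ge0 (Cadd z w)); pose proof (Cmod_ge0 z); pose proof (Cmod_ge0 w).
  destruct z as [a b], w as [c d]; simpl Cre in *; simpl Cim in *.
  set (X := Cmod (mkC a b)) in *. set (Y := Cmod (mkC c d)) in *. set (Z := Cmod _) in *.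
  assert ((a*c+b*d) <= X * Y).
  { assert ((a*c+b*d)^2 <= (X * Y)^2).
    { replace ((X*Y)^2) with (X^2 * Y^2) by ring. rewrite H0, H1.
      pose proof (pow2_ge_0 (a*d-b*c)). nra. }
    apply Rsqr_incr_0_var; unfold Rsqr; nra. }
  assert (Z^2 <= (X+Y)^2) by nra. nra. Qed.
Lemma Cmod_conj z : Cmod (Cconj z) = Cmod z.
Proof. unfold Cmod; simpl; f_equal; ring. Qed.
Lemma Cmod_opp z : Cmod (Copp z) = Cmod z.
Proof. unfold Cmod; simpl; f_equal; ring. Qed.
Lemma Cmod_sub_sym z w : Cmod (Csub z w) = Cmod (Csub w z).
Proof. unfold Cmod; simpl; f_equal; ring. Qed.

Lemma rabs_b x y : Rabs x <= y -> - y <= x /\ x <= y.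
Proof. intros. unfold Rabs in H. destruct (Rcase_abs x); lra. Qed.

Lemma hadd_zero_l (Hs : HilbertSpace) (x : Hs) : hadd hzero x = x.
Proof. rewrite hadd_comm; apply hadd_zero. Qed.

Lemma hidem (Hs : HilbertSpace) (y : Hs) : hadd y y = y -> y = hzero.
Proof. intro E. rewrite <- (hadd_opp Hs y). rewrite <- E at 2.
  rewrite <- hadd_assoc, hadd_opp, hadd_zero. reflexivity. Qed.

Lemma hscal_C0 (Hs : HilbertSpace) (x : Hs) : hscal Defs.C0 x = hzero.
Proof. apply hidem. rewrite <- hscal_adds. f_equal. csolve. Qed.

Lemma inner_zero_l (Hs : HilbertSpace) (y : Hs) : inner hzero y = Defs.C0.
Proof. rewrite <- (hscal_C0 Hs hzero), inner_scal_l. csolve. Qed.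
Lemma inner_zero_r (Hs : HilbertSpace) (y : Hs) : inner y hzero = Defs.C0.
Proof. rewrite inner_conj_sym, inner_zero_l. csolve. Qed.

Lemma inner_add_r (Hs : HilbertSpace) (x y z : Hs) :
  inner x (hadd y z) = Cadd (inner x y) (inner x z).
Proof. rewrite inner_conj_sym, inner_add_l, (inner_conj_sym _ y x), (inner_conj_sym _ z x).
  csolve. Qed.
Lemma inner_scal_r (Hs : HilbertSpace) a (x y : Hs) :
  inner x (hscal a y) = Cmul (Cconj a) (inner x y).
Proof. rewrite inner_conj_sym, inner_scal_l, (inner_conj_sym _ y x). csolve. Qed.

Lemma hopp_scal (Hs : HilbertSpace) (x : Hs) : hopp x = hscal (mkC (-1) 0) x.
Proof.
  assert (E : hadd x (hscal (mkC (-1) 0) x) = hzero).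
  { rewrite <- (hscal_one Hs x) at 1. rewrite <- hscal_adds.
    replace (Cadd Defs.C1 (mkC (-1) 0)) with Defs.C0 by csolve. apply hscal_C0. }
  rewrite <- (hadd_zero_l Hs (hopp x)). rewrite <- E.
  rewrite (hadd_comm _ x), <- hadd_assoc, hadd_opp, hadd_zero. reflexivity. Qed.

Lemma inner_self_im (Hs : HilbertSpace) (x : Hs) : Cim (inner x x) = 0.
Proof. pose proof (inner_conj_sym Hs x x). destruct (inner x x) as [a b]. simpl.
  unfold Cconj in H; simpl in H. injection H. lra. Qed.

Lemma inner_self (Hs : HilbertSpace) (x : Hs) : inner x x = mkC (hnorm x ^ 2) 0.
Proof. apply cext; cbn [Cre Cim]. unfold hnorm. rewrite pow2_sqrt; [reflexivity| apply inner_pos].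
  apply inner_self_im. Qed.

Lemma hnorm_ge0 (Hs : HilbertSpace) (x : Hs) : 0 <= hnorm x.
Proof. apply sqrt_pos. Qed.

Lemma hnorm_zero (Hs : HilbertSpace) (x : Hs) : hnorm x = 0 -> x = hzero.
Proof. intro E. apply inner_def. rewrite inner_self, E. csolve. Qed.

Lemma hnorm_scal (Hs : HilbertSpace) a (x : Hs) : hnorm (hscal a x) = Cmod a * hnorm x.
Proof. unfold hnorm, Cmod. rewrite inner_scal_l, inner_scal_r, <- sqrt_mult.
  - f_equal. rewrite inner_self. unfold hnorm. rewrite pow2_sqrt by apply inner_pos.
    destruct a; simpl; ring.
  - nra.
  - apply inner_pos.
Qed.

Lemma CS_sq (Hs : HilbertSpace) (x y : Hs) :
  Cre (inner x y) ^ 2 + Cim (inner x y) ^ 2 <= hnorm x ^ 2 * hnorm y ^ 2.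
Proof.
  destruct (Req_dec (hnorm y) 0) as [Hy|Hy].
  - apply hnorm_zero in Hy. subst. rewrite inner_zero_r. simpl. nra.
  - set (p := inner x y).
    set (t := / hnorm y ^ 2).
    pose proof (inner_pos Hs (hadd x (hscal (mkC (- (t * Cre p)) (- (t * Cim p))) y))) as P.
    rewrite !inner_add_l, !inner_add_r, !inner_scal_l, !inner_scal_r in P.
    rewrite (inner_self Hs x), (inner_self Hs y) in P.
    rewrite (inner_conj_sym Hs x y) in P. fold p in P.
    destruct p as [p1 p2]; simpl in P |- *.
    assert (Hpos : 0 < hnorm y ^ 2) by (pose proof (hnorm_ge0 Hs y); nra).
    assert (Ht : t * hnorm y ^ 2 = 1) by (unfold t; field; lra).
    assert (Ht0 : 0 < t) by (unfold t; apply Rinv_0_lt_compat; lra).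
    nra.
Qed.

Lemma CS (Hs : HilbertSpace) (x y : Hs) : Cmod (inner x y) <= hnorm x * hnorm y.
Proof. apply Cmod_le_of_sq. pose proof (hnorm_ge0 Hs x); pose proof (hnorm_ge0 Hs y); nra.
  pose proof (CS_sq Hs x y). nra. Qed.

Lemma hnorm_tri (Hs : HilbertSpace) (x y : Hs) : hnorm (hadd x y) <= hnorm x + hnorm y.
Proof.
  pose proof (inner_self Hs (hadd x y)) as E.
  rewrite !inner_add_l, !inner_add_r, (inner_self Hs x), (inner_self Hs y) in E.
  rewrite (inner_conj_sym Hs x y) in E. apply (f_equal Cre) in E. simpl in E.
  pose proof (Cre_le (inner x y)). pose proof (CS Hs x y).
  pose proof (hnorm_ge0 Hs x); pose proof (hnorm_ge0 Hs y); pose proof (hnorm_ge0 Hs (hadd x y)).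
  apply rabs_b in H; destruct H as [H H9].
  assert (hnorm (hadd x y) ^ 2 <= (hnorm x + hnorm y) ^ 2) by nra. nra. Qed.


Definition curvS (Om : cplx -> Prop) (lam n : cplx) (sg : R) : Prop :=
  forall M, exists delta, 0 < delta /\ forall eps, 0 < eps < delta ->
    forall w, cbdry Om w ->
      xi_coord lam n w ^ 2 + eta_coord lam n w ^ 2 <= eps ^ 2 ->
      xi_coord lam n w <> 0 -> 0 < sg * xi_coord lam n w ->
      M <= eta_coord lam n w / xi_coord lam n w ^ 2.

Lemma curv_plus Om lam n : gamma_l_plus_infinite Om lam n -> curvS Om lam n 1.
Proof. intros H M. destruct (H M) as [d [Hd H2]]. exists d; split; auto.
  intros. apply (H2 eps H0 w); auto. lra. Qed.
Lemma curv_minus Om lam n : gamma_l_minus_infinite Om lam n -> curvS Om lam n (-1).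
Proof. intros H M. destruct (H M) as [d [Hd H2]]. exists d; split; auto.
  intros. apply (H2 eps H0 w); auto. lra. Qed.

Definition Pt (w n : cplx) (t : R) : cplx := Csub w (Cmul (mkC t 0) n).

Lemma xi_Pt lam n w t : xi_coord lam n (Pt w n t) = xi_coord lam n w.
Proof. unfold xi_coord, Pt; destruct w, n, lam; simpl; ring. Qed.
Lemma eta_Pt lam n w t : Cmod n = 1 -> eta_coord lam n (Pt w n t) = eta_coord lam n w - t.
Proof. intros Hn. pose proof (Cmod_sq n) as E. rewrite Hn in E.
  unfold eta_coord, Pt; destruct w, n, lam; simpl in *. pose proof (f_equal (Rmult t) E). lra. Qed.

Lemma Cmod_real r : Cmod (mkC r 0) = Rabs r.
Proof. unfold Cmod; cbn [Cre Cim]. replace (r ^ 2 + 0 ^ 2) with (Rsqr r) by (unfold Rsqr; ring).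
  apply sqrt_Rsqr_abs. Qed.

Lemma Pt_dist w n a b : Cmod n = 1 -> Cmod (Csub (Pt w n a) (Pt w n b)) = Rabs (a - b).
Proof. intros Hn. replace (Csub (Pt w n a) (Pt w n b)) with (Cmul (mkC (b - a) 0) n)
  by (unfold Pt; destruct w, n; apply cext; simpl; ring).
  rewrite Cmod_mul, Hn, Cmod_real, Rabs_minus_sym. ring. Qed.

Lemma Pt0 w n : Pt w n 0 = w.
Proof. unfold Pt; destruct w, n; apply cext; simpl; ring. Qed.

Lemma G_lemma Om lam n sg :
  (forall w, ccl Om w -> Om w) -> Cmod n = 1 ->
  (forall w, Om w -> 0 <= eta_coord lam n w) ->
  curvS Om lam n sg ->
  forall M, exists delta, 0 < delta /\ forall w, Om w ->
    xi_coord lam n w ^ 2 + eta_coord lam n w ^ 2 < delta ^ 2 ->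
    0 < sg * xi_coord lam n w -> M * xi_coord lam n w ^ 2 <= eta_coord lam n w.
Proof.
  intros Hcl Hn Hsup Hcurv M.
  destruct (Hcurv M) as [d0 [Hd0 Hc]].
  exists (d0 / 2). split; [lra|]. intros w Hw Hsm Hsg.
  set (E := fun t => 0 <= t <= eta_coord lam n w /\ Om (Pt w n t)).
  assert (HE0 : E 0). { split. split; [lra| apply Hsup; auto]. rewrite Pt0; auto. }
  assert (Hb : bound E). { exists (eta_coord lam n w). intros t [Ht _]. lra. }
  destruct (completeness E Hb (ex_intro _ 0 HE0)) as [ts [Hub Hlub]].
  assert (Hts0 : 0 <= ts) by (apply Hub; auto).
  assert (Htsle : ts <= eta_coord lam n w).
  { apply Hlub. intros t [Ht _]. lra. }
  assert (Happ : forall e, 0 < e -> exists t, E t /\ ts - e < t).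
  { intros e He. apply NNPP. intro Hno.
    assert (ts <= ts - e). { apply Hlub. intros t Et. apply Rnot_lt_le. intro Hlt.
      apply Hno. exists t; auto. }
    lra. }
  assert (HOm : Om (Pt w n ts)).
  { apply Hcl. intros e He. destruct (Happ e He) as [t [Et Ht]].
    exists (Pt w n t). split. apply Et.
    rewrite Pt_dist by auto. assert (t <= ts) by (apply Hub; auto).
    rewrite Rabs_right by lra. lra. }
  assert (Hbd : cbdry Om (Pt w n ts)).
  { split.
    - intros e He. exists (Pt w n ts). split; auto.
      rewrite (Pt_dist w n ts ts Hn). replace (ts - ts) with 0 by ring.
      rewrite Rabs_R0. auto.
    - intros [e [He Hint]].
      assert (Hin : Om (Pt w n (ts + e / 2))).
      { apply Hint. rewrite Pt_dist by auto.
        replace (ts + e / 2 - ts) with (e / 2) by ring. rewrite Rabs_right; lra. }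
      destruct (Rle_lt_dec (ts + e / 2) (eta_coord lam n w)).
      + assert (ts + e / 2 <= ts). { apply Hub. split; auto. lra. } lra.
      + pose proof (Hsup _ Hin). rewrite eta_Pt in H by auto. lra. }
  assert (Hxi : xi_coord lam n w <> 0).
  { intro Z. rewrite Z in Hsg. lra. }
  pose proof (Hc (d0 / 2) ltac:(lra) (Pt w n ts) Hbd) as HH.
  rewrite xi_Pt, eta_Pt in HH by auto.
  assert (Hx2 : 0 < xi_coord lam n w ^ 2).
  { assert (xi_coord lam n w * xi_coord lam n w > 0) by
       (destruct (Rlt_dec 0 (xi_coord lam n w)); [nra| assert (xi_coord lam n w < 0) by lra; nra]).
    nra. }
  assert (HH2 : M <= (eta_coord lam n w - ts) / xi_coord lam n w ^ 2).
  { apply HH; auto.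
    assert (0 <= eta_coord lam n w - ts <= eta_coord lam n w) by lra.
    assert ((eta_coord lam n w - ts)^2 <= eta_coord lam n w ^2) by nra.
    assert ((d0/2)^2 = (d0/2)^2) by reflexivity. nra. }
  apply (Rmult_le_compat_r (xi_coord lam n w ^ 2)) in HH2; [|lra].
  unfold Rdiv in HH2. rewrite Rmult_assoc, Rinv_l in HH2 by lra. lra.
Qed.

Definition Qt (lam n : cplx) (x : R) : cplx := Cadd lam (Cmul (mkC x 0) (Cmul (Copp Ci) n)).

Lemma outside_pts Om lam n sg :
  (forall w, ccl Om w -> Om w) -> Cmod n = 1 ->
  (forall w, Om w -> 0 <= eta_coord lam n w) ->
  curvS Om lam n sg -> (sg = 1 \/ sg = -1) ->
  forall rho, 0 < rho -> exists z, ~ Om z /\ Cmod (Csub z lam) < rho.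
Proof.
  intros Hcl Hn Hsup Hcurv Hsg rho Hrho.
  destruct (G_lemma Om lam n sg Hcl Hn Hsup Hcurv 1) as [d [Hd HG]].
  set (x := Rmin rho d / 2).
  assert (Hx : 0 < x /\ x < rho /\ x < d) by
    (unfold x; pose proof (Rmin_l rho d); pose proof (Rmin_r rho d);
     pose proof (Rmin_glb_lt rho d 0 Hrho Hd); lra).
  pose proof (Cmod_sq n) as En. rewrite Hn in En.
  exists (Qt lam n (sg * x)). split.
  - intro HO. 
    assert (Xi : xi_coord lam n (Qt lam n (sg * x)) = sg * x).
    { unfold xi_coord, Qt; destruct n, lam; simpl in *. nra. }
    assert (Et : eta_coord lam n (Qt lam n (sg * x)) = 0).
    { unfold eta_coord, Qt; destruct n, lam; simpl in *. ring. }
    pose proof (HG _ HO). rewrite Xi, Et in H.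
    assert (sg * sg = 1) by (destruct Hsg; subst; ring).
    assert (0 < sg * (sg * x)) by nra.
    specialize (H ltac:(nra) H1). nra.
  - replace (Csub (Qt lam n (sg * x)) lam) with (Cmul (mkC (sg * x) 0) (Cmul (Copp Ci) n))
      by (unfold Qt; destruct n, lam; apply cext; simpl; ring).
    rewrite Cmod_mul, Cmod_real, Cmod_mul, Hn.
    replace (Cmod (Copp Ci)) with 1 by (unfold Cmod; cbn [Cre Cim Copp Ci];
      rewrite <- sqrt_1 at 1; f_equal; ring).
    rewrite Rabs_mult. replace (Rabs sg) with 1 by (destruct Hsg; subst;
      [rewrite Rabs_R1 | rewrite Rabs_left by lra]; lra).
    rewrite Rabs_right by lra. lra.
Qed.


Definition ReP (w1 u1 u2 v1 v2 r1 s1 s2 : R) : R :=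
  w1 + (s1*u1 + s2*u2 + s1*v1 - s2*v2) + (s1^2 + s2^2) * r1.
Definition ImP (w2 u1 u2 v1 v2 r2 s1 s2 : R) : R :=
  w2 + (s1*u2 - s2*u1 + s1*v2 + s2*v1) + (s1^2 + s2^2) * r2.
Definition NP (a1 a2 H s1 s2 : R) : R := 1 + 2 * (s1*a1 + s2*a2) + (s1^2+s2^2) * H^2.

Lemma abs_bnd x y : x ^ 2 <= y ^ 2 -> 0 <= y -> - y <= x <= y.
Proof. intros. split; (timeout 60 nra). Qed.

Lemma endgame (c d sg w1 w2 u1 u2 a1 a2 e1 e2 H : R) :
  0 < c -> 0 < d -> (sg = 1 \/ sg = -1) -> 0 <= H -> 7 * c * H <= 8 ->
  e1^2 + e2^2 <= (c/8)^2 -> a1^2 + a2^2 <= H^2 ->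
  let v1 := 1 + e1*a1 + e2*a2 in let v2 := e2*a1 - e1*a2 in
  let r1 := a1 + e1*H^2 in let r2 := a2 + e2*H^2 in
  let K := 2 / c in
  let t := Rmin (Rmin (c/4) (d/20)) 1 in
  let eps0 := t^2 / (16*K+16) in
  (forall s1 s2, 0 <= ReP w1 u1 u2 v1 v2 r1 s1 s2) ->
  (forall s1 s2, 0 < NP a1 a2 H s1 s2 ->
     (ImP w2 u1 u2 v1 v2 r2 s1 s2 / NP a1 a2 H s1 s2)^2 +
     (ReP w1 u1 u2 v1 v2 r1 s1 s2 / NP a1 a2 H s1 s2)^2 < d^2 ->
     0 < sg * (- ImP w2 u1 u2 v1 v2 r2 s1 s2 / NP a1 a2 H s1 s2) ->
     (16/c+8) * (- ImP w2 u1 u2 v1 v2 r2 s1 s2 / NP a1 a2 H s1 s2)^2 <=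
       ReP w1 u1 u2 v1 v2 r1 s1 s2 / NP a1 a2 H s1 s2) ->
  w1^2 + w2^2 < eps0^2 -> False.
Proof.
  intros Hc Hd Hsg HH HcH He Ha v1 v2 r1 r2 K t eps0 R1 R2 Hw.
  assert (HK : K * c = 2) by (unfold K; field; lra).
  assert (HK0 : 0 < K) by (unfold K; apply Rdiv_lt_0_compat; lra).
  assert (Ht : 0 < t /\ t <= c/4 /\ t <= d/20 /\ t <= 1).
  { unfold t. pose proof (Rmin_l (Rmin (c/4) (d/20)) 1). pose proof (Rmin_r (Rmin (c/4) (d/20)) 1).
    pose proof (Rmin_l (c/4) (d/20)). pose proof (Rmin_r (c/4) (d/20)).
    assert (0 < Rmin (c/4) (d/20)) by (apply Rmin_glb_lt; lra).
    assert (0 < Rmin (Rmin (c / 4) (d / 20)) 1) by (apply Rmin_glb_lt; lra). lra. }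
  destruct Ht as [Ht0 [Htc [Htd Ht1]]].
  assert (HtK : t * K <= 1/2) by (timeout 60 nra).
  assert (He0 : 0 < eps0) by (unfold eps0; apply Rdiv_lt_0_compat; (timeout 60 nra)).
  assert (He1 : eps0 * (16*K+16) = t^2) by (unfold eps0; field; lra).
  assert (Hw1 : - eps0 <= w1 <= eps0) by (apply abs_bnd; (timeout 60 nra)).
  assert (Hw2 : - eps0 <= w2 <= eps0) by (apply abs_bnd; (timeout 60 nra)).
  assert (HHc : c * H <= 8/7) by lra.
  assert (Ha1 : - H <= a1 <= H) by (apply abs_bnd; (timeout 60 nra)).
  assert (Ha2 : - H <= a2 <= H) by (apply abs_bnd; (timeout 60 nra)).
  assert (He1b : - (c/8) <= e1 <= c/8) by (apply abs_bnd; (timeout 60 nra)).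
  assert (He2b : - (c/8) <= e2 <= c/8) by (apply abs_bnd; (timeout 60 nra)).
  assert (Hea : (e1*a1+e2*a2)^2 <= (1/7)^2).
  { assert ((e1*a1+e2*a2)^2 <= (e1^2+e2^2)*(a1^2+a2^2)) by (pose proof (pow2_ge_0 (e1*a2-e2*a1)); (timeout 60 nra)).
    assert ((e1^2+e2^2)*(a1^2+a2^2) <= (c/8)^2 * H^2).
    { apply Rmult_le_compat; auto; apply Rplus_le_le_0_compat; apply pow2_ge_0. }
    assert ((c/8)^2*H^2 = (c*H)^2/64) by field.
    assert (0 <= c*H) by (apply Rmult_le_pos; lra).
    assert ((c*H)^2 <= (8/7)^2) by (apply pow_incr; lra). lra. }
  assert (Hv1 : 6/7 <= v1 <= 8/7).
  { unfold v1. pose proof (abs_bnd _ _ Hea ltac:(lra)). lra. }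
  assert (HeH : Rabs e1 * H^2 <= 8 / (49 * c)).
  { assert (Rabs e1 <= c/8) by (apply Rabs_le; lra).
    assert (H^2 <= (8/(7*c))^2).
    { assert (H <= 8/(7*c)) by (apply (Rmult_le_reg_l (7*c)); [lra| field_simplify; lra]). (timeout 60 nra). }
    assert (Rabs e1 * H^2 <= (c/8) * (8/(7*c))^2) by (apply Rmult_le_compat; try (timeout 60 nra); apply Rabs_pos).
    replace ((c/8) * (8/(7*c))^2) with (8/(49*c)) in H2 by (field; lra). lra. }
  assert (HeH2 : Rabs e2 * H^2 <= 8 / (49 * c)).
  { assert (Rabs e2 <= c/8) by (apply Rabs_le; lra).
    assert (H^2 <= (8/(7*c))^2).
    { assert (H <= 8/(7*c)) by (apply (Rmult_le_reg_l (7*c)); [lra| field_simplify; lra]). (timeout 60 nra). }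
    assert (Rabs e2 * H^2 <= (c/8) * (8/(7*c))^2) by (apply Rmult_le_compat; try (timeout 60 nra); apply Rabs_pos).
    replace ((c/8) * (8/(7*c))^2) with (8/(49*c)) in H2 by (field; lra). lra. }
  assert (HHb : H <= 8/(7*c)) by (apply (Rmult_le_reg_l (7*c)); [lra| field_simplify; lra]).
  assert (HKb : 8/(7*c) + 8/(49*c) <= K) by (unfold K; apply (Rmult_le_reg_l c); [lra| field_simplify; lra]).
  assert (Hr1 : - K <= r1 <= K).
  { unfold r1. pose proof (Rle_abs e1). pose proof (Rle_abs (-e1)). rewrite Rabs_Ropp in H1.
    assert (0 <= H^2) by (timeout 60 nra). (timeout 60 nra). }
  assert (Hr2 : - K <= r2 <= K).
  { unfold r2. pose proof (Rle_abs e2). pose proof (Rle_abs (-e2)). rewrite Rabs_Ropp in H1.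
    assert (0 <= H^2) by (timeout 60 nra). (timeout 60 nra). }
  set (p1 := u1 + v1). set (p2 := u2 - v2).
  assert (Hp : p1^2 + p2^2 < t^2/4).
  { pose proof (R1 (-(c/4)*p1) (-(c/4)*p2)) as A.
    unfold ReP in A.
    replace (w1 + (- (c / 4) * p1 * u1 + - (c / 4) * p2 * u2 + - (c / 4) * p1 * v1 - - (c / 4) * p2 * v2) +
        ((- (c / 4) * p1) ^ 2 + (- (c / 4) * p2) ^ 2) * r1)
      with (w1 - (c/4) * (p1^2+p2^2) + (c/4)^2 * (p1^2+p2^2) * r1) in A
      by (unfold p1, p2; ring).
    assert ((c/4)^2 * (p1^2+p2^2) * r1 <= (c/8) * (p1^2+p2^2)).
    { assert ((c/4)^2 * r1 <= c/8).
      { assert ((c/4)^2 * r1 <= (c/4)^2 * K) by (apply Rmult_le_compat_l; (timeout 60 nra)).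
        replace ((c/4)^2*K) with (c/8) in H0 by (unfold K; field; lra). lra. }
      assert (0 <= p1^2+p2^2) by (timeout 60 nra). (timeout 60 nra). }
    assert ((c/8) * (p1^2+p2^2) <= eps0) by lra.
    assert (p1^2+p2^2 <= 8 * eps0 / c) by (apply (Rmult_le_reg_l (c/8)); [lra| field_simplify; lra]).
    assert (8 * eps0 / c = 4 * K * eps0) by (unfold K; field; lra).
    assert (4 * K * eps0 * (16*K+16) = 4*K*t^2) by (rewrite <- He1; ring).
    assert (4 * K * eps0 < t^2/4).
    { apply (Rmult_lt_reg_r (16*K+16)); [lra|]. rewrite H4. (timeout 60 nra). }
    lra. }
  assert (Hp1 : - (t/2) <= p1 <= t/2) by (apply abs_bnd; (timeout 60 nra)).
  assert (Hp2 : - (t/2) <= p2 <= t/2) by (apply abs_bnd; (timeout 60 nra)).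
  assert (Hsg2 : sg * sg = 1) by (destruct Hsg; subst; ring).
  set (s2 := - sg * t).
  set (X := ImP w2 u1 u2 v1 v2 r2 0 s2).
  set (Y := ReP w1 u1 u2 v1 v2 r1 0 s2).
  set (N := NP a1 a2 H 0 s2).
  assert (HX : X = w2 + s2 * (v1 - u1) + t^2 * r2).
  { unfold X, ImP, s2. replace ((- sg * t)^2) with (sg*sg*t^2) by ring. rewrite Hsg2. ring. }
  assert (HY : Y = w1 + s2 * p2 + t^2 * r1).
  { unfold Y, ReP, s2, p2. replace ((- sg * t)^2) with (sg*sg*t^2) by ring. rewrite Hsg2. ring. }
  assert (HN : N = 1 + 2 * s2 * a2 + t^2 * H^2).
  { unfold N, NP, s2. replace ((- sg * t)^2) with (sg*sg*t^2) by ring. rewrite Hsg2. ring. }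
  assert (Hv1u1 : v1 - u1 = 2 * v1 - p1) by (unfold p1; ring).
  assert (HtH : t * H <= 2/7).
  { assert (t * H <= (c/4) * H) by (apply Rmult_le_compat_r; lra). (timeout 60 nra). }
  assert (Hs2a2 : - (2/7) <= s2 * a2 <= 2/7).
  { unfold s2. destruct Hsg; subst sg; split; (timeout 60 nra). }
  assert (HNb : 3/7 <= N <= 2).
  { rewrite HN. assert (0 <= t*H) by (timeout 60 nra).
    assert ((t*H)^2 <= (2/7)^2) by (apply pow_incr; lra).
    assert (0 <= t^2*H^2 <= 4/49) by (split; (timeout 60 nra)). lra. }
  assert (Heps : eps0 <= t^2/16).
  { apply (Rmult_le_reg_r (16*K+16)); [lra|]; rewrite He1.
    assert (0 <= t^2) by apply pow2_ge_0.
    assert (0 <= t^2 * K) by (apply Rmult_le_pos; lra). lra. }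
  assert (Heps2 : eps0 <= t/16) by (timeout 60 nra).
  assert (Ht2K : t^2 * K <= t/2) by (timeout 60 nra).
  assert (Hr2t : - (t/2) <= t^2 * r2 <= t/2) by (split; (timeout 60 nra)).
  assert (Hr1t : - (t/2) <= t^2 * r1 <= t/2) by (split; (timeout 60 nra)).
  assert (Hr1t' : t^2 * r1 <= t^2 * K) by (timeout 60 nra).
  assert (Hsp2 : - (t*(t/2)) <= s2 * p2 <= t * (t/2)).
  { unfold s2. destruct Hsg; subst sg; split; (timeout 60 nra). }
  assert (Hsx : - sg * (s2 * (v1 - u1)) = t * (2 * v1 - p1)).
  { unfold s2. rewrite Hv1u1. replace (- sg * (- sg * t * (2 * v1 - p1))) with (sg*sg*t*(2*v1-p1)) by ring.
    rewrite Hsg2. ring. }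
  assert (Hsw2 : - eps0 <= - sg * w2 <= eps0) by (destruct Hsg; subst sg; lra).
  assert (Hsr2 : - (t/2) <= - sg * (t^2 * r2) <= t/2) by (destruct Hsg; subst sg; lra).
  assert (HmX : t/2 <= - sg * X).
  { rewrite HX. replace (- sg * (w2 + s2 * (v1 - u1) + t ^ 2 * r2)) with
      (- sg * w2 + - sg * (s2 * (v1 - u1)) + - sg * (t ^ 2 * r2)) by ring.
    rewrite Hsx. (timeout 60 nra). }
  assert (HY0 : 0 <= Y) by apply R1.
  assert (HYb : Y <= eps0 + t^2/2 + t^2 * K) by (rewrite HY; lra).
  assert (HXa : X^2 <= 16 * t^2).
  { assert (- (4*t) <= - sg * X <= 4 * t).
    { split; [lra|]. rewrite HX. replace (- sg * (w2 + s2 * (v1 - u1) + t ^ 2 * r2)) with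
      (- sg * w2 + - sg * (s2 * (v1 - u1)) + - sg * (t ^ 2 * r2)) by ring.
      rewrite Hsx. assert (t*(2*v1-p1) <= t*3) by (apply Rmult_le_compat_l; lra). lra. }
    replace (X^2) with ((- sg * X)^2) by (replace ((- sg * X)^2) with (sg*sg*X^2) by ring; rewrite Hsg2; ring).
    pose proof (Rmult_le_pos (4*t - (-sg*X)) ((-sg*X) + 4*t) ltac:(lra) ltac:(lra)). (timeout 60 nra). }
  assert (HYa : Y^2 <= 4 * t^2).
  { assert (t^2 <= t) by (pose proof (Rmult_le_compat_l t t 1 ltac:(lra) Ht1); lra).
    assert (HY2 : Y <= 2 * t) by lra.
    pose proof (Rmult_le_compat Y (2*t) Y (2*t) HY0 HY0 HY2 HY2). (timeout 60 nra). }
  assert (HN0 : 0 < N) by lra.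
  assert (Hprem1 : (X / N)^2 + (Y / N)^2 < d^2).
  { replace ((X / N)^2 + (Y / N)^2) with ((X^2 + Y^2) * (/ N)^2) by (field; lra).
    assert (/ N <= 7/3). { apply (Rmult_le_reg_l N); [lra|]. rewrite Rinv_r by lra. lra. }
    assert (0 < / N) by (apply Rinv_0_lt_compat; lra).
    assert ((/N)^2 <= 49/9).
    { pose proof (Rmult_le_compat (/N) (7/3) (/N) (7/3) ltac:(lra) ltac:(lra) H0 H0). lra. }
    assert ((X^2+Y^2) * (/N)^2 <= 20*t^2 * (49/9)).
    { apply Rmult_le_compat; try lra. apply Rplus_le_le_0_compat; apply pow2_ge_0. apply pow2_ge_0. }
    assert (t^2 <= (d/20)^2) by (apply pow_incr; lra). 
    assert (0 < d^2) by (apply pow_lt; lra). lra. }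
  assert (Hprem2 : 0 < sg * (- X / N)).
  { replace (sg * (- X / N)) with ((- sg * X) / N) by (field; lra).
    apply Rdiv_lt_0_compat; lra. }
  pose proof (R2 0 s2 HN0 Hprem1 Hprem2) as C. fold X Y N in C.
  assert (C2 : (16/c+8) * X^2 <= Y * N).
  { apply (Rmult_le_compat_r (N^2)) in C; [|apply pow2_ge_0].
    replace ((16 / c + 8) * (- X / N) ^ 2 * N ^ 2) with ((16/c+8) * X^2) in C by (field; lra).
    replace (Y / N * N ^ 2) with (Y * N) in C by (field; lra). exact C. }
  assert (HX2 : t^2/4 <= X^2).
  { replace (X^2) with ((- sg * X)^2) by (replace ((- sg * X)^2) with (sg*sg*X^2) by ring; rewrite Hsg2; ring).
    pose proof (Rmult_le_compat (t/2) (-sg*X) (t/2) (-sg*X) ltac:(lra) ltac:(lra) HmX HmX). lra. }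
  assert (16/c + 8 = 8 * K + 8) by (unfold K; field; lra).
  rewrite H0 in C2.
  assert (Y * N <= Y * 2) by (apply Rmult_le_compat_l; lra).
  assert (0 < t^2) by (apply pow_lt; lra).
  assert ((8*K+8) * (t^2/4) <= (8*K+8) * X^2) by (apply Rmult_le_compat_l; lra).
  lra.
Qed.


Lemma hscal_zero_v (Hs : HilbertSpace) a : hscal a (@hzero Hs) = hzero.
Proof. apply hidem. rewrite <- hscal_addv, hadd_zero. reflexivity. Qed.

Lemma hsub_zero (Hs : HilbertSpace) (x : Hs) : hsub x hzero = x.
Proof. unfold hsub. rewrite hopp_scal, hscal_zero_v, hadd_zero. reflexivity. Qed.

Lemma lin_comb (Hs : HilbertSpace) D (A : Hs -> Hs) f h s :
  is_lin_op D A -> D f -> D h -> A (hadd f (hscal s h)) = hadd (A f) (hscal s (A h)).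
Proof. intros [H0 [Hadd [Hsc [HA HS]]]] Hf Hh.
  rewrite HA; auto. rewrite HS; auto. Qed.

Lemma D_comb (Hs : HilbertSpace) D (A : Hs -> Hs) f h s :
  is_lin_op D A -> D f -> D h -> D (hadd f (hscal s h)).
Proof. intros [H0 [Hadd [Hsc [HA HS]]]] Hf Hh. auto. Qed.

Lemma quad (Hs : HilbertSpace) (a b c d : Hs) s :
  inner (hadd a (hscal s b)) (hadd c (hscal s d)) =
  Cadd (Cadd (inner a c) (Cmul (Cconj s) (inner a d)))
       (Cadd (Cmul s (inner b c)) (Cmul (Cmul s (Cconj s)) (inner b d))).
Proof. rewrite !inner_add_l, !inner_add_r, !inner_scal_l, !inner_scal_r. csolve. Qed.

Definition bf {Hs : HilbertSpace} (A : Hs -> Hs) (n lam : cplx) (x y : Hs) : cplx :=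
  Cadd (Cmul (Cconj n) (inner (A x) y)) (Cmul (Cmul (Cconj n) (Copp lam)) (inner x y)).

Lemma bf_exp (Hs : HilbertSpace) D (A : Hs -> Hs) n lam f h s :
  is_lin_op D A -> D f -> D h ->
  bf A n lam (hadd f (hscal s h)) (hadd f (hscal s h)) =
  Cadd (Cadd (bf A n lam f f) (Cmul (Cconj s) (bf A n lam f h)))
       (Cadd (Cmul s (bf A n lam h f)) (Cmul (Cmul s (Cconj s)) (bf A n lam h h))).
Proof. intros. unfold bf. rewrite (lin_comb Hs D A f h s) by auto. rewrite !quad. csolve. Qed.

Definition nrm_pt {Hs : HilbertSpace} (A : Hs -> Hs) (g : Hs) : cplx :=
  Cmul (mkC (/ (hnorm g ^ 2)) 0) (inner (A g) g).

Lemma nrm_pt_num (Hs : HilbertSpace) D (A : Hs -> Hs) g :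
  is_lin_op D A -> D g -> 0 < hnorm g -> NumRange D A (nrm_pt A g).
Proof. intros [H0 [Hadd [Hsc [HA HS]]]] Hg Hpos.
  exists (hscal (mkC (/ hnorm g) 0) g). split; [auto|]. split.
  - rewrite hnorm_scal, Cmod_real, Rabs_right. field; lra.
    left; apply Rinv_0_lt_compat; auto.
  - rewrite HS by auto. rewrite inner_scal_l, inner_scal_r. unfold nrm_pt.
    apply cext; simpl; field; lra.
Qed.

Lemma nrm_coords (Hs : HilbertSpace) (A : Hs -> Hs) n lam g :
  0 < hnorm g ->
  eta_coord lam n (nrm_pt A g) = Cre (bf A n lam g g) / hnorm g ^ 2 /\
  xi_coord lam n (nrm_pt A g) = - Cim (bf A n lam g g) / hnorm g ^ 2.
Proof. intros Hp. unfold eta_coord, xi_coord, nrm_pt, bf. rewrite inner_self.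
  assert (0 < hnorm g ^ 2) by (apply pow_lt; auto).
  destruct (inner (A g) g) as [x y], n as [n1 n2], lam as [l1 l2]. simpl.
  split; field; lra. Qed.

Lemma bf_nonneg (Hs : HilbertSpace) D (A : Hs -> Hs) n lam g :
  is_lin_op D A -> D g ->
  (forall w, ccl (NumRange D A) w -> 0 <= eta_coord lam n w) ->
  0 <= Cre (bf A n lam g g).
Proof. intros Hl Hg Hsup.
  destruct (Req_dec (hnorm g) 0) as [Z|Z].
  - apply hnorm_zero in Z. subst. unfold bf. rewrite !inner_zero_r. simpl. lra.
  - assert (Hp : 0 < hnorm g) by (pose proof (hnorm_ge0 Hs g); lra).
    assert (HN : NumRange D A (nrm_pt A g)) by (apply nrm_pt_num; auto).
    assert (Hc : ccl (NumRange D A) (nrm_pt A g)).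
    { intros e He. exists (nrm_pt A g). split; auto.
      replace (Csub (nrm_pt A g) (nrm_pt A g)) with (mkC 0 0) by (destruct (nrm_pt A g); csolve).
      rewrite Cmod_real, Rabs_R0. auto. }
    pose proof (Hsup _ Hc). destruct (nrm_coords Hs A n lam g Hp) as [E _].
    rewrite E in H. assert (0 < hnorm g ^ 2) by (apply pow_lt; auto).
    apply (Rmult_le_compat_r (hnorm g ^ 2)) in H; [|lra].
    unfold Rdiv in H. rewrite Rmult_assoc, Rinv_l, Rmult_0_l in H by lra. lra.
Qed.

Lemma ccl_closed (S : cplx -> Prop) w : ccl (ccl S) w -> ccl S w.
Proof. intros H e He. destruct (H (e/2) ltac:(lra)) as [z1 [Hz1 D1]].
  destruct (Hz1 (e/2) ltac:(lra)) as [z2 [Hz2 D2]]. exists z2. split; auto.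
  replace (Csub w z2) with (Cadd (Csub w z1) (Csub z1 z2)) by (destruct w, z1, z2; csolve).
  pose proof (Cmod_add (Csub w z1) (Csub z1 z2)). lra. Qed.

Lemma scal_sub (Hs : HilbertSpace) D (A : Hs -> Hs) lam a x :
  is_lin_op D A -> D x ->
  hsub (A (hscal a x)) (hscal lam (hscal a x)) = hscal a (hsub (A x) (hscal lam x)).
Proof. intros [H0 [Hadd [Hsc [HA HS]]]] Hx. rewrite HS by auto. unfold hsub.
  rewrite hscal_addv, !hopp_scal, !hscal_assoc. f_equal. f_equal. csolve. Qed.

Lemma bounded_below (Hs : HilbertSpace) D (A : Hs -> Hs) lam :
  is_lin_op D A -> ~ approx_point_spectrum D A lam ->
  exists c, 0 < c /\ forall x, D x -> c * hnorm x <= hnorm (hsub (A x) (hscal lam x)).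
Proof.
  intros Hl Hn. apply NNPP. intro Hno.
  assert (Hk : forall k : nat, exists x, D x /\
     hnorm (hsub (A x) (hscal lam x)) < / INR (S k) * hnorm x).
  { intro k. apply NNPP. intro Hk0. apply Hno. exists (/ INR (S k)). split.
    - apply Rinv_0_lt_compat. apply lt_0_INR. lia.
    - intros x Hx. apply Rnot_lt_le. intro Hlt. apply Hk0. exists x; auto. }
  apply Hn.
  set (xs := fun k => proj1_sig (constructive_indefinite_description _ (Hk k))).
  assert (Hxs : forall k, D (xs k) /\ hnorm (hsub (A (xs k)) (hscal lam (xs k))) < / INR (S k) * hnorm (xs k))
    by (intro k; unfold xs; destruct (constructive_indefinite_description _ (Hk k)); auto).
  assert (Hpos : forall k, 0 < hnorm (xs k)).
  { intro k. destruct (Hxs k) as [_ H]. pose proof (hnorm_ge0 Hs (hsub (A (xs k)) (hscal lam (xs k)))).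
    pose proof (hnorm_ge0 Hs (xs k)).
    destruct (Req_dec (hnorm (xs k)) 0) as [Z|Z]; [rewrite Z in H; lra | lra]. }
  exists (fun k => hscal (mkC (/ hnorm (xs k)) 0) (xs k)). split; [|split].
  - intro k. destruct Hl as [_ [_ [Hsc _]]]. apply Hsc. apply Hxs.
  - intro k. rewrite hnorm_scal, Cmod_real, Rabs_right. specialize (Hpos k). field; lra.
    left; apply Rinv_0_lt_compat; auto.
  - intros eps He. destruct (archimed (/ eps)) as [Ha _].
    assert (0 < / eps) by (apply Rinv_0_lt_compat; auto).
    destruct (IZN (up (/ eps))) as [m Hm]. { apply le_IZR. lra. }
    rewrite Hm, <- INR_IZR_INZ in Ha.
    exists m. intros k Hkm. rewrite hsub_zero.
    rewrite (scal_sub Hs D A lam) by (auto; apply Hxs).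
    rewrite hnorm_scal, Cmod_real, Rabs_right by (left; apply Rinv_0_lt_compat; auto).
    destruct (Hxs k) as [_ Hb]. specialize (Hpos k).
    assert (/ hnorm (xs k) * hnorm (hsub (A (xs k)) (hscal lam (xs k))) < / INR (S k)).
    { apply (Rmult_lt_reg_l (hnorm (xs k))); auto. rewrite <- Rmult_assoc, Rinv_r by lra. lra. }
    assert (INR m <= INR k) by (apply le_INR; exact Hkm).
    assert (/ INR (S k) < eps).
    { rewrite S_INR. apply (Rmult_lt_reg_l (INR k + 1)); [pose proof (pos_INR k); lra|].
      rewrite Rinv_r by (pose proof (pos_INR k); lra).
      apply (Rmult_lt_reg_l (/ eps)); auto. rewrite Rmult_1_r.
      replace (/ eps * ((INR k + 1) * eps)) with (INR k + 1) by (field; lra). lra. }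
    lra.
Qed.


Lemma Cre_mk x y : Cre (mkC x y) = x. Proof. reflexivity. Qed.
Lemma Cim_mk x y : Cim (mkC x y) = y. Proof. reflexivity. Qed.

Lemma lnormal_props Om lam n : l_normal Om lam n ->
  Cmod n = 1 /\ forall w, Om w -> 0 <= eta_coord lam n w.
Proof. intros [Hc Hnc]. destruct (classic (corner_point Om lam)) as [C|C].
  - destruct (Hc C) as [al [[Hn [Hal Hin]] _]]. split; auto. intros w Hw.
    pose proof (Hin w Hw). unfold in_sector in H. unfold eta_coord.
    assert (0 <= cos al) by (apply cos_ge_0; pose proof PI_RGT_0; lra).
    pose proof (Cmod_ge0 (Csub w lam)). nra.
  - destruct (Hnc C) as [Hn Hs]. split; auto.
Qed.

Theorem mainTheorem4 (Hs : HilbertSpace) (D : Hs -> Prop) (A : Hs -> Hs) (lam : cplx) :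
  is_lin_op D A ->
  densely_defined D ->
  closed_op D A ->
  (exists w, cinterior (NumRange D A) w) ->
  (exists w, ~ NumRange D A w) ->
  (forall y, D y -> adj_dom D A y) ->
  (forall w, spectrum D A w -> ccl (NumRange D A) w) ->
  cbdry (NumRange D A) lam ->
  unilateral_infinite_curvature (ccl (NumRange D A)) lam ->
  approx_point_spectrum D A lam.
Proof.
  intros Hl _ _ _ _ _ Hspec Hbd Hcurv.
  apply NNPP. intro Hnap.
  destruct (bounded_below Hs D A lam Hl Hnap) as [c [Hc Hbb]].
  destruct Hcurv as [n [Hln Hside]].
  set (Om := ccl (NumRange D A)) in *.
  destruct (lnormal_props Om lam n Hln) as [Hn1 Hsup].
  assert (Hcl : forall w, ccl Om w -> Om w) by (intros; apply ccl_closed; auto).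
  assert (Hsg : exists sg, (sg = 1 \/ sg = -1) /\ curvS Om lam n sg).
  { destruct Hside as [P|P]; [exists 1; split; [left; reflexivity| apply curv_plus; auto]
                          | exists (-1); split; [right; reflexivity| apply curv_minus; auto]]. }
  destruct Hsg as [sg [Hsg Hcv]].
  destruct (outside_pts Om lam n sg Hcl Hn1 Hsup Hcv Hsg (c/8) ltac:(lra)) as [z [Hz Hzd]].
  assert (Hres : resolvent D A z).
  { apply NNPP. intro Hr. apply Hz. apply Hspec. exact Hr. }
  destruct (G_lemma Om lam n sg Hcl Hn1 Hsup Hcv (16/c+8)) as [d [Hd HG]].
  set (K := 2 / c). set (t := Rmin (Rmin (c/4) (d/20)) 1). set (eps0 := t^2 / (16*K+16)).
  assert (HK0 : 0 < K) by (unfold K; apply Rdiv_lt_0_compat; lra).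
  assert (Ht0 : 0 < t).
  { unfold t. assert (0 < Rmin (c/4) (d/20)) by (apply Rmin_glb_lt; lra). apply Rmin_glb_lt; lra. }
  assert (He0 : 0 < eps0) by (unfold eps0; apply Rdiv_lt_0_compat; [apply pow_lt|]; lra).
  destruct Hbd as [Hlc _].
  destruct (Hlc eps0 He0) as [w0 [[f [Hf [Hf1 Hw0]]] Hwd]].
  destruct Hres as [Hsurj _].
  destruct (Hsurj (hscal n f)) as [h [Hh Heq]].
  pose proof (Cmod_sq n) as En. rewrite Hn1 in En.
  assert (Hff : inner f f = mkC 1 0) by (rewrite inner_self, Hf1; apply cext; simpl; ring).
  assert (HAh : A h = hadd (hscal n f) (hscal z h)).
  { rewrite <- Heq. unfold hsub. rewrite <- hadd_assoc, (hadd_comm _ (hopp _)), hadd_opp, hadd_zero.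
    reflexivity. }
  set (H := hnorm h). set (a := inner f h). set (e := Cmul (Cconj n) (Csub z lam)).
  assert (HH0 : 0 <= H) by apply hnorm_ge0.
  assert (Hzl : Cmod (Csub z lam) < c/8) by exact Hzd.
  assert (HcH : 7 * c * H <= 8).
  { pose proof (Hbb h Hh) as B.
    assert (Hv : hsub (A h) (hscal lam h) = hadd (hscal n f) (hscal (Csub z lam) h)).
    { rewrite HAh. unfold hsub. rewrite hopp_scal, hscal_assoc, <- hadd_assoc, <- hscal_adds.
      f_equal. f_equal. destruct z, lam; csolve. }
    rewrite Hv in B. pose proof (hnorm_tri Hs (hscal n f) (hscal (Csub z lam) h)).
    rewrite !hnorm_scal, Hn1, Hf1 in H0. fold H in B, H0.
    pose proof (Cmod_ge0 (Csub z lam)).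
    assert (Cmod (Csub z lam) * H <= (c/8) * H) by (apply Rmult_le_compat_r; lra). lra. }
  assert (He : Cre e ^ 2 + Cim e ^ 2 <= (c/8)^2).
  { rewrite <- Cmod_sq. unfold e. rewrite Cmod_mul, Cmod_conj, Hn1, Rmult_1_l.
    pose proof (Cmod_ge0 (Csub z lam)). apply pow_incr; lra. }
  assert (Ha : Cre a ^ 2 + Cim a ^ 2 <= H ^ 2).
  { pose proof (CS_sq Hs f h). rewrite Hf1 in H0. fold a H in H0. lra. }
  assert (Hbhf : bf A n lam h f = mkC (1 + Cre e * Cre a + Cim e * Cim a) (Cim e * Cre a - Cre e * Cim a)).
  { unfold bf. rewrite HAh, inner_add_l, !inner_scal_l, Hff, (inner_conj_sym Hs f h). fold a. unfold e.
    destruct a as [a1 a2], n as [n1 n2], z as [z1 z2], lam as [l1 l2]; simpl in *.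
    apply cext; simpl; pose proof (f_equal (Rmult a1) En); pose proof (f_equal (Rmult a2) En); lra. }
  assert (Hbhh : bf A n lam h h = mkC (Cre a + Cre e * H^2) (Cim a + Cim e * H^2)).
  { unfold bf. rewrite HAh, inner_add_l, !inner_scal_l, inner_self. fold a H. unfold e.
    destruct a as [a1 a2], n as [n1 n2], z as [z1 z2], lam as [l1 l2]; simpl in *.
    apply cext; simpl; pose proof (f_equal (Rmult a1) En); pose proof (f_equal (Rmult a2) En); lra. }
  assert (Hw : Cre (bf A n lam f f) ^ 2 + Cim (bf A n lam f f) ^ 2 < eps0 ^ 2).
  { pose proof (Cmod_lt_sq _ _ Hwd). unfold bf. rewrite Hff, <- Hw0.
    destruct w0 as [x1 x2], n as [n1 n2], lam as [l1 l2]; cbn [Cre Cim Cmul Cadd Csub Copp Cconj] in *.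
    match goal with |- ?X ^ 2 + ?Y ^ 2 < _ =>
      replace (X^2+Y^2) with ((n1^2+n2^2) * ((l1 + - x1) ^ 2 + (l2 + - x2) ^ 2)) by ring end.
    rewrite <- En. lra. }
  set (u := bf A n lam f h).
  apply (endgame c d sg (Cre (bf A n lam f f)) (Cim (bf A n lam f f)) (Cre u) (Cim u)
                 (Cre a) (Cim a) (Cre e) (Cim e) H Hc Hd Hsg HH0 HcH He Ha); [ | | exact Hw].
  - intros s1 s2.
    pose proof (bf_nonneg Hs D A n lam (hadd f (hscal (mkC s1 s2) h)) Hl
                  (D_comb Hs D A f h _ Hl Hf Hh) Hsup) as P.
    rewrite (bf_exp Hs D A n lam f h (mkC s1 s2) Hl Hf Hh), Hbhf, Hbhh in P. fold u in P.
    unfold ReP. simpl in P. simpl. nra.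
  - intros s1 s2 HNp Hsm Hsgn.
    set (g := hadd f (hscal (mkC s1 s2) h)).
    assert (Hg : D g) by (apply (D_comb Hs D A); auto).
    assert (HNg : hnorm g ^ 2 = NP (Cre a) (Cim a) H s1 s2).
    { pose proof (inner_self Hs g) as E. unfold g in E at 1 2. rewrite quad, Hff, (inner_conj_sym Hs f h), inner_self in E.
      fold a H in E. apply (f_equal Cre) in E. fold g in E. unfold NP.
      destruct a as [a1 a2]; simpl in *. nra. }
    assert (Hgp : 0 < hnorm g).
    { pose proof (hnorm_ge0 Hs g). destruct (Req_dec (hnorm g) 0) as [Z|Z]; [|lra].
      rewrite Z in HNg. simpl in HNg. lra. }
    assert (Hbg : bf A n lam g g = mkC (ReP (Cre (bf A n lam f f)) (Cre u) (Cim u)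
                     (1 + Cre e * Cre a + Cim e * Cim a) (Cim e * Cre a - Cre e * Cim a)
                     (Cre a + Cre e * H^2) s1 s2)
                   (ImP (Cim (bf A n lam f f)) (Cre u) (Cim u)
                     (1 + Cre e * Cre a + Cim e * Cim a) (Cim e * Cre a - Cre e * Cim a)
                     (Cim a + Cim e * H^2) s1 s2)).
    { unfold g. rewrite (bf_exp Hs D A n lam f h (mkC s1 s2) Hl Hf Hh), Hbhf, Hbhh. fold u.
      unfold ReP, ImP. apply cext; simpl; ring. }
    assert (HO : Om (nrm_pt A g)).
    { intros ee Hee. exists (nrm_pt A g). split. apply nrm_pt_num; auto.
      replace (Csub (nrm_pt A g) (nrm_pt A g)) with (mkC 0 0) by (destruct (nrm_pt A g); csolve).
      rewrite Cmod_real, Rabs_R0. auto. }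
    destruct (nrm_coords Hs A n lam g Hgp) as [Eeta Exi].
    rewrite Hbg, HNg in Eeta, Exi. rewrite Cre_mk in Eeta. rewrite Cim_mk in Exi.
    pose proof (HG _ HO) as HG'. rewrite Eeta, Exi in HG'.
    apply HG'.
    + replace ((- ImP (Cim (bf A n lam f f)) (Cre u) (Cim u) (1 + Cre e * Cre a + Cim e * Cim a)
                  (Cim e * Cre a - Cre e * Cim a) (Cim a + Cim e * H ^ 2) s1 s2 /
                NP (Cre a) (Cim a) H s1 s2) ^ 2)
        with ((ImP (Cim (bf A n lam f f)) (Cre u) (Cim u) (1 + Cre e * Cre a + Cim e * Cim a)
                  (Cim e * Cre a - Cre e * Cim a) (Cim a + Cim e * H ^ 2) s1 s2 /
                NP (Cre a) (Cim a) H s1 s2) ^ 2) by (field; lra).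
      exact Hsm.
    + exact Hsgn.
Qed.
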